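(* Let $S, U, M \ge 1$ be integers and let $\mu_Q \in \mathbb{R}_{+}^{S \times U}$ with rows $\mu_{q^{(1)}}, \dots, \mu_{q^{(S)}} \in \mathbb{R}_+^{U}$. Let $\mathbb{N} = \{0,1,2,\dots\}$. Say that a subset $\mathcal{M} \subseteq \{1,\dots,S\}$ \emph{suffices for exact matching} if for every agent distribution $X \in \mathbb{N}^{M \times S}$ there exists $\hat X \in \mathbb{N}^{M \times S}$ whose columns indexed by $s \notin \mathcal{M}$ are identically zero and such that $\hat X \mu_Q = X \mu_Q$. Then $\mathcal{M}$ suffices for exact matching if and only if for every $\tilde s \in \{1,\dots,S\} \setminus \mathcal{M}$ there exist nonnegative integers $\alpha_{s\tilde s} \in \mathbb{N}$, $s \in \mathcal{M}$, with $$\sum_{s \in \mathcal{M}} \alpha_{s\tilde s}\, \mu_{q^{(s)}} = \mu_{q^{(\tilde s)}}.$$ Consequently, the minspecies cardinality for exact matching, $\mathcal{D}_{\mathcal{G}_1}(\mu_Q)$ (the minimum cardinality of a subset $\mathcal{M}$ that suffices for exact matching), equals $$\min\Big\{ |\mathcal{M}_1| : \mathcal{M}_1 \subseteq \{1,\dots,S\},\ \forall \tilde s \notin \mathcal{M}_1\ \exists (\alpha_{s\tilde s})_{s\in\mathcal{M}_1} \in \mathbb{N}^{\mathcal{M}_1} \text{ with } \textstyle\sum_{s \in \mathcal{M}_1} \alpha_{s\tilde s}\, \mu_{q^{(s)}} = \mu_{q^{(\tilde s)}} \Big\}.$$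
   Context: A heterogeneous team consists of $S$ species; $\mu_Q$ is the expected species-trait matrix whose $(s,u)$ entry is the expected value of trait $u$ for an agent of species $s$. There are $M$ tasks; an agent distribution is a matrix $X \in \mathbb{N}^{M\times S}$ whose $(i,s)$ entry is the number of agents of species $s$ assigned to task $i$, and the resulting expected task-trait distribution is $X\mu_Q \in \mathbb{R}_+^{M\times U}$. The exact-matching goal for a desired trait distribution $Y^*$ requires $X\mu_Q = Y^*$. The number of available agents per species is not bounded in this statement. *)

(* Defs.v *)
From HB Require Import structures.
From mathcomp Require Import all_boot all_order all_algebra.
Set Implicit Arguments. Unset Strict Implicit. Unset Printing Implicit Defensive.
Import Order.TTheory GRing.Theory Num.Theory.
Local Open Scope ring_scope.

Definition natmx (R : realFieldType) (m n : nat) (X : 'M[nat]_(m, n)) : 'M[R]_(m, n) :=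
  map_mx (fun k : nat => k%:R) X.

Definition suffices_exact (R : realFieldType) (S U M : nat)
    (muQ : 'M[R]_(S, U)) (Mset : {set 'I_S}) : Prop :=
  forall X : 'M[nat]_(M, S),
    exists Xh : 'M[nat]_(M, S),
      (forall (i : 'I_M) (s : 'I_S), s \notin Mset -> Xh i s = 0%N) /\
      natmx R Xh *m muQ = natmx R X *m muQ.

Definition int_generated (R : realFieldType) (S U : nat)
    (muQ : 'M[R]_(S, U)) (Mset : {set 'I_S}) : Prop :=
  forall st : 'I_S, st \notin Mset ->
    exists alpha : 'I_S -> nat,
      \sum_(s in Mset) (alpha s)%:R *: row s muQ = row st muQ.

Definition is_min_card (S : nat) (P : {set 'I_S} -> Prop) (n : nat) : Prop :=
  (exists A : {set 'I_S}, P A /\ #|A| = n) /\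
  (forall A : {set 'I_S}, P A -> (n <= #|A|)%N).

(* Main.v *)
Require Import Defs.
From HB Require Import structures.
From mathcomp Require Import all_boot all_order all_algebra.
Import Order.TTheory GRing.Theory Num.Theory.
Local Open Scope ring_scope.

Lemma rowmul (R : realFieldType) m S U (X : 'M[nat]_(m,S)) (mu : 'M[R]_(S,U)) i :
  row i (natmx R X *m mu) = \sum_s (X i s)%:R *: row s mu.
Proof. rewrite row_mul mulmx_sum_row; apply: eq_bigr => s _; by rewrite !mxE. Qed.

Lemma equiv1 (R : realFieldType) (S U M : nat) (hM : (1 <= M)%N)
    (muQ : 'M[R]_(S, U)) (Mset : {set 'I_S}) :
  suffices_exact M muQ Mset <-> int_generated muQ Mset.
Proof.
split.
- move=> H st hst.
  pose i0 : 'I_M := Ordinal hM.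
  have [Xh [H0 HE]] := H (\matrix_(i, j) (if (i == i0) && (j == st) then 1 else 0)%N).
  exists (Xh i0).
  have := congr1 (row i0) HE; rewrite !rowmul => E.
  have -> : row st muQ = \sum_s (((\matrix_(i, j) (if (i == i0) && (j == st) then 1 else 0)%N) : 'M[nat]_(M,S)) i0 s)%:R *: row s muQ.
    rewrite (bigD1 st) //= big1 ?addr0; first by rewrite mxE !eqxx scale1r.
    by move=> s /negbTE ns; rewrite mxE eqxx ns scale0r.
  rewrite -E [RHS](bigID (mem Mset)) /= [X in _ + X]big1 ?addr0 //.
  by move=> s hs; rewrite H0 // scale0r.
- move=> H.
  have [alpha Ha] : exists alpha : 'I_S -> 'I_S -> nat, forall st, st \notin Mset ->
      \sum_(s in Mset) (alpha st s)%:R *: row s muQ = row st muQ.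
    apply: (fin_all_exists (P := fun st (a : 'I_S -> nat) => st \notin Mset ->
      \sum_(s in Mset) (a s)%:R *: row s muQ = row st muQ)) => st.
    case: (boolP (st \in Mset)) => hst.
      by exists (fun _ => 0%N).
    by have [a Ha] := H st hst; exists a.
  move=> X.
  exists (\matrix_(i, s) (if s \in Mset then
      (X i s + \sum_(st | st \notin Mset) X i st * alpha st s)%N else 0%N)).
  split; first by move=> i s hs; rewrite mxE (negbTE hs).
  apply/row_matrixP => i; rewrite !rowmul.
  rewrite (bigID (mem Mset)) /= [X in _ + X]big1; last first.
    by move=> s hs; rewrite mxE (negbTE hs) scale0r.
  rewrite addr0 [RHS](bigID (mem Mset)) /=.
  under eq_bigr => s hs do rewrite mxE hs natrD scalerDl.
  rewrite big_split /=; congr (_ + _).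
  under eq_bigr => s hs do rewrite natr_sum scaler_suml.
  rewrite exchange_big /=; apply: eq_bigr => st hst.
  rewrite -(Ha st hst) scaler_sumr; apply: eq_bigr => s _.
  by rewrite natrM scalerA.
Qed.

Theorem proposition1 (R : realFieldType) (S U M : nat)
    (hS : (1 <= S)%N) (hU : (1 <= U)%N) (hM : (1 <= M)%N)
    (muQ : 'M[R]_(S, U)) (hmu : forall s u, 0 <= muQ s u) :
  (forall Mset : {set 'I_S},
      suffices_exact M muQ Mset <-> int_generated muQ Mset) /\
  (forall n : nat,
      is_min_card (fun A => suffices_exact M muQ A) n <->
      is_min_card (fun A => int_generated muQ A) n).
Proof.
have E := @equiv1 R S U M hM muQ.
split=> // n; rewrite /is_min_card; split.
- case=> [[A [HA HC]] Hm]; split; first by exists A; split=> //; apply/E.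
  by move=> B HB; apply: Hm; apply/E.
- case=> [[A [HA HC]] Hm]; split; first by exists A; split=> //; apply/E.
  by move=> B HB; apply: Hm; apply/E.
Qed.
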